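(* Let $\Pi$ be an online subadditive coverage problem and $p\in[0,1]$. If there exists an $\alpha(p)$-competitive monotone algorithm for $\Pi$ in the $p$-sample independent model, then there exists an $\alpha(p)$-competitive algorithm for $\Pi$ in the $(\frac12,p)$-sample MRF model.
   Context: Subadditive coverage problem: $V$ is a set of demand points and $E$ a ground set of elements; for each $D \subseteq V$ there is a family $\mathcal{F}_D \subseteq 2^E$ of feasible solutions such that (a) $S_1\in\mathcal{F}_{D_1}$, $S_2\in\mathcal{F}_{D_2}$ imply $S_1\cup S_2\in\mathcal{F}_{D_1\cup D_2}$, and (b) $D_1\subseteq D_2$ implies $\mathcal{F}_{D_2}\subseteq\mathcal{F}_{D_1}$. The cost $c:2^E\to\mathbb{R}_{\ge0}$ is monotone and subadditive; $\mathrm{OPT}(D)=\min_{S\in\mathcal{F}_D}c(S)$. Online: demands arrive one at a time, and after each arrival the algorithm irrevocably adds elements so that its current set is feasible for all demands so far. $p$-sample independent model: an adversary chooses an unknown value set $V=\{v_1,\dots,v_n\}$; a sample $S\subseteq V$, containing each $v_i$ independently with known probability $p$, is revealed upfront; $R=V\setminus S$ arrive as demands in adversarial order. An algorithm is $\alpha(p)$-competitive if its expected cost is at most $\alpha(p)\cdot\mathrm{OPT}(V)$. It is monotone if it remains $\alpha(p)$-competitive when the sample set is augmented by moving some (possibly adversarially chosen) real values into it, i.e. the sample is any $S\supseteq S'$ with $S'$ containing each $v_i$ independently with probability $p$, and the demand set is $V\setminus S$. $(\frac12,p)$-sample MRF model: an adversary chooses an unknown value set $V=\{v_1,\dots,v_n\}$;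 a random sample $S\subseteq V$ is revealed upfront, where $(\mathbf{1}[v_i\in S])_{i\in[n]}$ has an unknown MRF distribution over $\{0,1\}^n$ (a distribution with $\Pr[x]\propto\exp(\sum_i\psi_i(x_i)+\sum_e\psi_e(x_e))$ for a hypergraph and potentials) such that for each $i$: $\Pr[v_i\in S]\ge1/2$, and $\Pr[v_i\in S\mid\text{membership of all }v_{i'},i'\neq i]\ge p$ for every conditioning. The values $V\setminus S$ arrive in adversarial order as demands. Competitiveness is measured against $\mathrm{OPT}(V)$ as in the $p$-sample model. *)

(* Defs.v *)
From HB Require Import structures.
From mathcomp Require Import all_boot all_order all_algebra.
From mathcomp Require Import all_classical all_reals all_analysis.
Set Implicit Arguments. Unset Strict Implicit. Unset Printing Implicit Defensive.
Import Order.TTheory GRing.Theory Num.Theory.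
Local Open Scope ring_scope.

(* Demand points live in a finite type U, elements in a finite type E.
   F D S  means  S \in F_D ;  c is the cost function. *)

Definition coverage_union (U E : finType) (F : {set U} -> {set E} -> Prop) :=
  forall (D1 D2 : {set U}) (S1 S2 : {set E}), F D1 S1 -> F D2 S2 -> F (D1 :|: D2) (S1 :|: S2).

Definition coverage_antimono (U E : finType) (F : {set U} -> {set E} -> Prop) :=
  forall (D1 D2 : {set U}) (S : {set E}), D1 \subset D2 -> F D2 S -> F D1 S.

Definition cost_nonneg (R : realType) (E : finType) (c : {set E} -> R) :=
  forall S, 0 <= c S.

Definition cost_monotone (R : realType) (E : finType) (c : {set E} -> R) :=
  forall A B : {set E}, A \subset B -> c A <= c B.

Definition cost_subadditive (R : realType) (E : finType) (c : {set E} -> R) :=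
  forall A B : {set E}, c (A :|: B) <= c A + c B.

Definition subadditive_coverage (R : realType) (U E : finType)
  (F : {set U} -> {set E} -> Prop) (c : {set E} -> R) :=
  [/\ coverage_union F, coverage_antimono F,
      cost_nonneg c, cost_monotone c & cost_subadditive c].

(* The default value [c [set: E]] is an upper bound
   of every c S (c monotone), so this is exactly the minimum whenever F_D is
   nonempty; OPT is only ever used for such D. *)
Definition OPT (R : realType) (U E : finType)
  (F : {set U} -> {set E} -> Prop) (c : {set E} -> R) (D : {set U}) : R :=
  \big[Num.min/c [set: E]]_(S : {set E} | `[< F D S >]) c S.

(* A deterministic online algorithm maps the revealed sample (a set of values)
   and the sequence of demands arrived so far to its current solution.
   A randomized algorithm is a finite mixture of deterministic ones
   (random seed drawn from a finite type with weights [wt]). *)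
Record ralg (R : realType) (U E : finType) := RAlg {
  seed : finType;
  wt : seed -> R;
  run : seed -> {set U} -> seq U -> {set E}
}.
Arguments seed {R U E} _.
Arguments wt {R U E} _ _.
Arguments run {R U E} _ _ _ _.

Definition ralg_wf (R : realType) (U E : finType) (A : ralg R U E) :=
  (forall r, 0 <= wt A r) /\ \sum_(r : seed A) wt A r = 1.

(* A run on sample [smp] and arrival sequence [arr] is valid: after each
   arrival the current set is feasible for all demands arrived so far, and
   the solution only grows (irrevocability). *)
Definition valid_run (U E : finType) (F : {set U} -> {set E} -> Prop)
  (a : {set U} -> seq U -> {set E}) (smp : {set U}) (arr : seq U) :=
  forall k : nat, (k <= size arr)%N ->
    ((0 < k)%N -> F [set x in take k arr] (a smp (take k arr))) /\
    ((k < size arr)%N -> a smp (take k arr) \subset a smp (take k.+1 arr)).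

(* Expected cost when the sample index set is drawn from mu, the actual sample
   is [aug T] (T the drawn set), and demands arrive in the order [ord T]. *)
Definition exp_cost (R : realType) (U E : finType) (c : {set E} -> R)
  (A : ralg R U E) (n : nat) (v : 'I_n -> U) (mu : {set 'I_n} -> R)
  (aug : {set 'I_n} -> {set 'I_n}) (ord : {set 'I_n} -> seq 'I_n) : R :=
  \sum_(T : {set 'I_n}) mu T *
     \sum_(r : seed A) wt A r * c (run A r (v @: aug T) (map v (ord T))).

Definition competitive_on (R : realType) (U E : finType)
  (F : {set U} -> {set E} -> Prop) (c : {set E} -> R) (alpha : R)
  (A : ralg R U E) (n : nat) (v : 'I_n -> U) (mu : {set 'I_n} -> R)
  (aug : {set 'I_n} -> {set 'I_n}) (ord : {set 'I_n} -> seq 'I_n) :=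
  (forall (T : {set 'I_n}) (r : seed A), valid_run F (run A r) (v @: aug T) (map v (ord T))) /\
  exp_cost c A v mu aug ord <= alpha * OPT F c (v @: [set: 'I_n]).

Definition indep_sample (R : realType) (n : nat) (p : R) (T : {set 'I_n}) : R :=
  p ^+ #|T| * (1 - p) ^+ (n - #|T|).

(* Monotone alpha-competitive in the p-sample independent model: the
   adversary may augment the p-sample T to any aug T containing T; the
   remaining values arrive in an adversarial order (depending on T). *)
Definition monotone_indep_competitive (R : realType) (U E : finType)
  (F : {set U} -> {set E} -> Prop) (c : {set E} -> R) (p alpha : R)
  (A : ralg R U E) :=
  ralg_wf A /\
  forall (n : nat) (v : 'I_n -> U), injective v ->
  (exists S, F (v @: [set: 'I_n]) S) ->
  forall (aug : {set 'I_n} -> {set 'I_n}), (forall T : {set 'I_n}, T \subset aug T) ->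
  forall (ord : {set 'I_n} -> seq 'I_n),
    (forall T : {set 'I_n}, perm_eq (ord T) (enum (~: aug T))) ->
    competitive_on F c alpha A v (indep_sample p) aug ord.

(* Hypergraph H on [n], vertex potentials psi1, hyperedge potentials psiE
   (psiE e applied to the restriction x_e, represented as T :&: e). *)
Definition mrf_weight (R : realType) (n : nat) (H : {set {set 'I_n}})
  (psi1 : 'I_n -> bool -> R) (psiE : {set 'I_n} -> {set 'I_n} -> R)
  (T : {set 'I_n}) : R :=
  expR (\sum_(i : 'I_n) psi1 i (i \in T) + \sum_(e in H) psiE e (T :&: e)).

Definition is_MRF (R : realType) (n : nat) (mu : {set 'I_n} -> R) :=
  exists (H : {set {set 'I_n}}) (psi1 : 'I_n -> bool -> R)
         (psiE : {set 'I_n} -> {set 'I_n} -> R),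
  forall T : {set 'I_n}, mu T = mrf_weight H psi1 psiE T /
                   \sum_(T' : {set 'I_n}) mrf_weight H psi1 psiE T'.

(* Pr[v_i in S] >= q, and Pr[v_i in S | S \ {v_i} = B] >= p for every B. *)
Definition half_p_MRF (R : realType) (n : nat) (q p : R) (mu : {set 'I_n} -> R) :=
  is_MRF mu /\
  forall i : 'I_n,
    q <= \sum_(T : {set 'I_n} | i \in T) mu T /\
    forall B : {set 'I_n}, i \notin B ->
      p <= mu (i |: B) / (mu (i |: B) + mu B).

Definition mrf_competitive (R : realType) (U E : finType)
  (F : {set U} -> {set E} -> Prop) (c : {set E} -> R) (p alpha : R)
  (A : ralg R U E) :=
  ralg_wf A /\
  forall (n : nat) (v : 'I_n -> U), injective v ->
  (exists S, F (v @: [set: 'I_n]) S) ->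
  forall mu : {set 'I_n} -> R, half_p_MRF (1 / 2) p mu ->
  forall (ord : {set 'I_n} -> seq 'I_n),
    (forall T : {set 'I_n}, perm_eq (ord T) (enum (~: T))) ->
    competitive_on F c alpha A v mu id ord.

(* Main.v *)
Require Import Defs.
From HB Require Import structures.
From mathcomp Require Import all_boot all_order all_algebra.
From mathcomp Require Import all_classical all_reals all_analysis.
From mathcomp Require Import ring lra.
Import Order.TTheory GRing.Theory Num.Theory.
Local Open Scope ring_scope.

Lemma split_sub (R : realType) (I : finType) (X : {set I}) (i : I) (G : {set I} -> R) :
  i \in X ->
  \sum_(T : {set I} | T \subset X) G T =
  \sum_(B : {set I} | B \subset X :\ i) G (i |: B) + \sum_(B : {set I} | B \subset X :\ i) G B.
Proof.
move=> iX; rewrite (bigID (fun T : {set I} => i \in T)) /=; congr (_ + _).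
- rewrite (reindex_onto (fun B => i |: B) (fun T => T :\ i)) /=; last first.
    by move=> T /andP[_ iT]; exact: finset.setD1K.
  apply: eq_bigl => B; rewrite subsetD1 setU11 andbT.
  apply/idP/idP.
  + move=> /andP[sub /eqP e]; rewrite -e setD11 andbT.
    exact: fintype.subset_trans (finset.subsetDl _ _) sub.
  + move=> /andP[sub niB]; rewrite setU1K // eqxx andbT.
    by rewrite finset.subUset finset.sub1set iX sub.
- by apply: eq_bigl => T; rewrite subsetD1.
Qed.

Definition wX {R : realType} {I : finType} (p : R) (X T : {set I}) : R :=
  p ^+ #|T| * (1 - p) ^+ (#|X| - #|T|).

Lemma dom (R : realType) (I : finType) (p : R) : 0 <= p <= 1 ->
  forall k (X : {set I}), #|X| = k ->
  forall (nu h : {set I} -> R), (forall S, 0 <= nu S) ->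
  (forall (i : I) (B : {set I}), i \in X -> B \subset X -> i \notin B -> p * nu B <= (1 - p) * nu (i |: B)) ->
  (forall A B : {set I}, A \subset B -> h B <= h A) ->
  \sum_(S : {set I} | S \subset X) nu S * h S <=
  (\sum_(S : {set I} | S \subset X) nu S) * \sum_(T : {set I} | T \subset X) wX p X T * h T.
Proof.
move=> /andP[p0 p1]; elim=> [|k IH] X cX nu h nu0 hc hm.
  move/eqP: cX; rewrite cards_eq0 => /eqP ->.
  have e : forall S : {set I}, (S \subset finset.set0) = (S == finset.set0).
    by move=> S; rewrite finset.subset0.
  rewrite !(eq_bigl _ _ e) !big_pred1_eq.
  by rewrite /wX cards0 expr0 mul1r subnn expr0 mul1r.
have : (0 < #|X|)%N by rewrite cX.
case/card_gt0P => i iX.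
set X' := X :\ i.
have cX' : #|X'| = k by move: cX; rewrite (cardsD1 i X) iX add1n => -[].
rewrite !(split_sub _ _ _ _ _ iX) -/X'.
have := IH X' cX' (fun B => nu (i |: B)) (fun B => h (i |: B)) (fun S => nu0 _).
have H1 : forall (j : I) (B : {set I}), j \in X' -> B \subset X' -> j \notin B ->
    p * nu (i |: B) <= (1 - p) * nu (i |: (j |: B)).
  move=> j B; rewrite in_setD1 => /andP[ji jX] BX jB.
  rewrite finset.setUCA; apply: hc => //.
    by rewrite finset.subUset finset.sub1set iX (fintype.subset_trans BX) // finset.subsetDl.
  by rewrite in_setU1 negb_or ji.
move=> /(_ H1) {H1}.
have H2 : forall A B : {set I}, A \subset B -> h (i |: B) <= h (i |: A).
  by move=> A B AB; apply: hm; apply: finset.setUS.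
move=> /(_ H2) {H2} L1.
have H1 : forall (j : I) (B : {set I}), j \in X' -> B \subset X' -> j \notin B ->
    p * nu B <= (1 - p) * nu (j |: B).
  move=> j B; rewrite in_setD1 => /andP[ji jX] BX jB.
  apply: hc => //; by rewrite (fintype.subset_trans BX) // finset.subsetDl.
have L0 := IH X' cX' nu h nu0 H1 hm.
set N1 := \sum_(B : {set I} | B \subset X') nu (i |: B).
set N0 := \sum_(B : {set I} | B \subset X') nu B.
set a := \sum_(B : {set I} | B \subset X') wX p X' B * h (i |: B).
set b := \sum_(B : {set I} | B \subset X') wX p X' B * h B.
have e1 : \sum_(B : {set I} | B \subset X') wX p X (i |: B) * h (i |: B) = p * a.
  rewrite /a mulr_sumr; apply: eq_bigr => B BX.
  have iB : i \notin B by apply: contraL BX => iB; apply/negP => /fintype.subsetP/(_ _ iB); rewrite setD11.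
  rewrite /wX cardsU1 iB cX cX' add1n subSS exprS; lra.
have e0 : \sum_(B : {set I} | B \subset X') wX p X B * h B = (1 - p) * b.
  rewrite /b mulr_sumr; apply: eq_bigr => B BX.
  have cB : (#|B| <= k)%N by rewrite -cX'; apply: subset_leq_card.
  rewrite /wX cX cX' subSn // exprS; lra.
rewrite e1 e0.
have ab : a <= b.
  apply: ler_sum => B _; apply: ler_wpM2l; last by apply: hm; apply: finset.subsetUr.
  by rewrite /wX mulr_ge0 // exprn_ge0 // subr_ge0.
have NN : p * N0 <= (1 - p) * N1.
  rewrite /N0 /N1 !mulr_sumr; apply: ler_sum => B BX; apply: hc => //.
    by rewrite (fintype.subset_trans BX) // finset.subsetDl.
  by apply: contraL BX => iB; apply/negP => /fintype.subsetP/(_ _ iB); rewrite setD11.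
have N10 : 0 <= N1 by apply: sumr_ge0.
have N00 : 0 <= N0 by apply: sumr_ge0.
have P : 0 <= (b - a) * ((1 - p) * N1 - p * N0) by apply: mulr_ge0; lra.
move: L1 L0; rewrite -/N1 -/N0 -/a -/b => L1 L0.
apply: le_trans (lerD L1 L0) _.
rewrite -subr_ge0.
have -> : (N1 + N0) * (p * a + (1 - p) * b) - (N1 * a + N0 * b)
   = (b - a) * ((1 - p) * N1 - p * N0) by ring.
exact: P.
Qed.

Theorem lemma3p10 (R : realType) (U E : finType)
  (F : {set U} -> {set E} -> Prop) (c : {set E} -> R) (p alpha : R) :
  subadditive_coverage F c ->
  0 <= p <= 1 ->
  (exists A : ralg R U E, monotone_indep_competitive F c p alpha A) ->
  exists A : ralg R U E, mrf_competitive F c p alpha A.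
Proof.
move=> _ hp [A [wfA HA]]; exists A; split => // n v injv Fex mu
  [[H [psi1 [psiE hmu]]] hcond] ord hord.
have mu0 : forall T, 0 < mu T.
  move=> T; rewrite hmu; apply: divr_gt0; first exact: expR_gt0.
  rewrite (bigD1 (@finset.set0 'I_n)) //=.
  have h1 : 0 < mrf_weight H psi1 psiE finset.set0 by apply: expR_gt0.
  apply: (lt_le_trans h1); rewrite lerDl.
  by apply: sumr_ge0 => T' _; apply/ltW/expR_gt0.
have mu1 : \sum_(T : {set 'I_n}) mu T = 1.
  under eq_bigr => T _ do rewrite hmu.
  rewrite -mulr_suml mulfV //; apply/lt0r_neq0.
  rewrite (bigD1 (@finset.set0 'I_n)) //=.
  have h1 : 0 < mrf_weight H psi1 psiE finset.set0 by apply: expR_gt0.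
  apply: (lt_le_trans h1); rewrite lerDl.
  by apply: sumr_ge0 => T' _; apply/ltW/expR_gt0.
pose f := fun S : {set 'I_n} =>
  \sum_(r : seed A) wt A r * c (run A r (v @: S) (map v (ord S))).
have hg : forall T : {set 'I_n}, exists S : {set 'I_n}, T \subset S /\
    forall S' : {set 'I_n}, T \subset S' -> f S' <= f S.
  move=> T.
  case: (@Order.TotalTheory.arg_maxP _ R _ T (fun S => T \subset S) f (fintype.subxx T))
    => S TS Smax.
  by exists S; split => // S' /Smax.
case: (choice hg) => g Hg.
split.
  move=> T r.
  have [Hv _] := HA n v injv Fex (fun T' => T' :|: T) (fun T' => finset.subsetUl _ _)
    (fun T' => ord (T' :|: T)) (fun T' => hord _).
  by have := Hv finset.set0 r; rewrite finset.set0U.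
have [_ Hc] := HA n v injv Fex g (fun T => (Hg T).1) (fun T => ord (g T))
  (fun T => hord (g T)).
apply: le_trans Hc.
rewrite /exp_cost.
apply: (@le_trans _ _ (\sum_(T : {set 'I_n}) mu T * f (g T))).
  apply: ler_sum => T _; apply: ler_wpM2l; first exact: ltW.
  exact: (Hg T).2 T (fintype.subxx T).
have cT : #|[set: 'I_n]| = n by rewrite cardsT card_ord.
have := @dom R 'I_n p hp n [set: 'I_n] cT mu (fun T => f (g T)) (fun T => ltW (mu0 T)).
have hc : forall (i : 'I_n) (B : {set 'I_n}), i \in [set: 'I_n] -> B \subset [set: 'I_n] ->
    i \notin B -> p * mu B <= (1 - p) * mu (i |: B).
  move=> i B _ _ iB.
  have := (hcond i).2 B iB.
  have x0 := mu0 (i |: B); have y0 := mu0 B.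
  rewrite ler_pdivlMr; last lra.
  move=> h; nra.
move=> /(_ hc) {hc}.
have hm : forall A0 B0 : {set 'I_n}, A0 \subset B0 -> f (g B0) <= f (g A0).
  move=> A0 B0 AB; apply: (Hg A0).2.
  exact: fintype.subset_trans AB (Hg B0).1.
move=> /(_ hm) {hm}.
have eT : forall S : {set 'I_n}, (S \subset [set: 'I_n]) = true.
  by move=> S; apply: finset.subsetT.
rewrite !(eq_bigl _ _ eT) mu1 mul1r.
move=> h; apply: le_trans h _; rewrite le_eqVlt; apply/orP; left; apply/eqP.
by apply: eq_bigr => T _; rewrite /wX /indep_sample cT.
Qed.
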